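(* Let $\alpha,\beta$ be positive integers and let $h$ be a real-valued function differentiable on an open neighbourhood of $\mathcal{U}_2$ in $\mathbb{C}^{2\times2}$, with $h(\Psi D)=h(\Psi)$ for all $\Psi\in\mathcal{U}_2$ and diagonal unitary $D$, such that $h(\Psi(\theta,\phi))=z_{\alpha,\beta}(\theta,\phi)^TMz_{\alpha,\beta}(\theta,\phi)+C$ for all $\theta,\phi\in\mathbb{R}$, for some real symmetric $M\in\mathbb{R}^{3\times3}$ and $C\in\mathbb{R}$. Let $\lambda_1\ge\lambda_2\ge\lambda_3$ be the eigenvalues of $M$, and assume $\frac{\lambda_2-\lambda_3}{\lambda_1-\lambda_3}\le1-\varepsilon$ for some $\varepsilon>0$. Let $w$ be a unit eigenvector of $M$ for $\lambda_1$ with $w_1\ge0$, let $\theta_*\in[0,\pi/(2\alpha)]$, $\phi_*\in\mathbb{R}$ satisfy $z_{\alpha,\beta}(\theta_*,\phi_* )=w$, and $\Psi_*=\Psi(\theta_*,\phi_* )$. Then $$h(\Psi_* )-h(I_2)\ge\frac{\varepsilon}{4\alpha}\,\|\operatorname{grad}h(I_2)\|\,\|\Psi_*-I_2\|.$$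
   Context: $\mathcal{U}_2$ is the group of $2\times2$ unitary matrices; $\|\cdot\|$ the Frobenius norm; $\mathbb{C}^{2\times2}$ carries the real inner product $\mathrm{Re}\,\mathrm{tr}(X^HY)$; $\nabla h=\partial h/\partial X^{\Re}+\mathrm{i}\,\partial h/\partial X^{\Im}$ and $\operatorname{grad}h(U)=U\,\mathrm{skew}(U^H\nabla h(U))$ with $\mathrm{skew}(P)=\frac12(P-P^H)$. $\Psi(\theta,\phi)=\begin{bmatrix}\cos\theta&-\sin\theta e^{\mathrm{i}\phi}\\ \sin\theta e^{-\mathrm{i}\phi}&\cos\theta\end{bmatrix}$ and $z_{\alpha,\beta}(\theta,\phi)=(\cos\alpha\theta,-\sin\alpha\theta\cos\beta\phi,-\sin\alpha\theta\sin\beta\phi)^T$. *)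

(* Defs.v *)
(* A complex 2x2 matrix X is represented by the pair
   (Re X, Im X) of real 2x2 matrices, i.e. C^{2x2} is identified with
   'M[R]_2 * 'M[R]_2 (a real normed space). *)
From HB Require Import structures.
From mathcomp Require Import all_boot all_order all_algebra.
From mathcomp Require Import all_classical all_reals all_analysis.
Set Implicit Arguments. Unset Strict Implicit. Unset Printing Implicit Defensive.
Import Order.TTheory GRing.Theory Num.Theory.
Import numFieldNormedType.Exports.
Local Open Scope ring_scope.

Section Defs.
Variable R : realType.

Definition cmx := ('M[R]_2 * 'M[R]_2)%type.

Definition cmul (X Y : cmx) : cmx :=
  (X.1 *m Y.1 - X.2 *m Y.2, X.1 *m Y.2 + X.2 *m Y.1).
Definition cadj (X : cmx) : cmx := (X.1^T, - X.2^T).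
Definition cI2 : cmx := (1%:M, 0).
Definition csub (X Y : cmx) : cmx := (X.1 - Y.1, X.2 - Y.2).

Definition unitary (U : cmx) : Prop := cmul (cadj U) U = cI2.
Definition is_diag2 (D : cmx) : Prop :=
  forall i j : 'I_2, i != j -> D.1 i j = 0 /\ D.2 i j = 0.
Definition diag_unitary (D : cmx) : Prop := unitary D /\ is_diag2 D.

Definition frob (X : cmx) : R :=
  Num.sqrt (\sum_(i < 2) \sum_(j < 2) (X.1 i j ^+ 2 + X.2 i j ^+ 2)).

Definition egrad (h : cmx -> R) (X : cmx) : cmx :=
  (\matrix_(i, j) ('D_((delta_mx i j : 'M[R]_2), (0 : 'M[R]_2)) h X),
   \matrix_(i, j) ('D_((0 : 'M[R]_2), (delta_mx i j : 'M[R]_2)) h X)).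

Definition skew (P : cmx) : cmx :=
  ((2%:R)^-1 *: (csub P (cadj P)).1, (2%:R)^-1 *: (csub P (cadj P)).2).

Definition rgrad (h : cmx -> R) (U : cmx) : cmx :=
  cmul U (skew (cmul (cadj U) (egrad h U))).

Definition Psi (t p : R) : cmx :=
  (\matrix_(i < 2, j < 2)
     (if i == j then cos t
      else if (i == 0) then - (sin t * cos p) else sin t * cos p),
   \matrix_(i < 2, j < 2)
     (if i == j then 0 else - (sin t * sin p))).

Definition zab (a b : nat) (t p : R) : 'cV[R]_3 :=
  \col_(k < 3)
    (if k == 0 then cos (a%:R * t)
     else if k == 1 then - (sin (a%:R * t) * cos (b%:R * p))
     else - (sin (a%:R * t) * sin (b%:R * p))).

End Defs.

(* Main.v *)
Require Import Defs.
From HB Require Import structures.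
From mathcomp Require Import all_boot all_order all_algebra.
From mathcomp Require Import all_classical all_reals all_analysis.
From mathcomp Require Import ring lra.
Import Order.TTheory GRing.Theory Num.Theory.
Import numFieldNormedType.Exports.
Local Open Scope ring_scope.



Lemma det3 (R : comNzRingType) (A : 'M[R]_3) : \det A =
  A 0 0 * (A 1 1 * A 2 2 - A 1 2 * A 2 1)
  - A 0 1 * (A 1 0 * A 2 2 - A 1 2 * A 2 0)
  + A 0 2 * (A 1 0 * A 2 1 - A 1 1 * A 2 0).
Proof.
rewrite (expand_det_row _ 0) !big_ord_recl big_ord0 /cofactor.
rewrite !(expand_det_row _ 0) !big_ord_recl !big_ord0 /cofactor !det_mx11 !mxE /=.
pose g (i j : nat) := A (inord i) (inord j).
have E : forall i j : 'I_3, A i j = g i j by move=> i j; rewrite /g !inord_val.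
rewrite !E /= !expr0 !expr1 !expr2. rewrite /g. ring.
Qed.

Lemma horner_char (R : comNzRingType) n (M : 'M[R]_n) t :
  (char_poly M).[t] = \det (t%:M - M).
Proof.
rewrite /char_poly -[_.[t]]/(horner_eval t _) -det_map_mx; congr (\det _).
by apply/matrixP => i j; rewrite !mxE /= rmorphB rmorphMn /= horner_evalE hornerX horner_evalE hornerC.
Qed.

Lemma trT (R : realFieldType) (M : 'M[R]_3) l1 l2 l3 :
  char_poly M = ('X - l1%:P) * ('X - l2%:P) * ('X - l3%:P) ->
  \tr ((M - l2%:M) *m (M - l3%:M)) = (l1 - l2) * (l1 - l3).
Proof.
move=> Hc.
have H t : \det (t%:M - M) = (t - l1) * (t - l2) * (t - l3).
  by rewrite -horner_char Hc !hornerE.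
have H0 := H 0; have H1 := H 1; have H2 := H (-1).
rewrite !det3 !mxE /= in H0 H1 H2.
rewrite /mxtrace !big_ord_recl big_ord0 !mxE.
rewrite !big_ord_recl !big_ord0 !mxE /=.
pose g (i j : nat) := M (inord i) (inord j).
have E : forall i j : 'I_3, M i j = g i j by move=> i j; rewrite /g !inord_val.
rewrite !E /= in H0 H1 H2 *.
have m2 : ((1 %% 3 + 1 %% 3) %% 3 = 2)%N by [].
have m1 : (1 %% 3 = 1)%N by [].
rewrite !m2 !m1 in H0 H1 H2. rewrite /bump /=.
set A := g 0%N 0%N + g 1%N 1%N + g 2%N 2%N.
set E2 := g 0%N 0%N * g 1%N 1%N + g 0%N 0%N * g 2%N 2%N + g 1%N 1%N * g 2%N 2%N
  - g 0%N 1%N * g 1%N 0%N - g 0%N 2%N * g 2%N 0%N - g 1%N 2%N * g 2%N 1%N.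
have HA : A = l1 + l2 + l3.
  rewrite /A. lra.
have HE : E2 = l1 * l2 + l1 * l3 + l2 * l3.
  rewrite /E2. lra.
transitivity (A ^+ 2 - 2 * E2 - (l2 + l3) * A + 3 * l2 * l3).
  rewrite /A /E2. ring.
rewrite HA HE. ring.
Qed.

Section LA.
Variable R : realFieldType.

Lemma hmx_tr (M : 'M[R]_3) (q : {poly R}) : M^T = M ->
  (horner_mx M q)^T = horner_mx M q.
Proof.
move=> HM; elim/poly_ind: q => [|p c IH].
  by rewrite rmorph0 trmx0.
rewrite rmorphD rmorphM /= horner_mx_X horner_mx_C linearD /= -mulmxE trmx_mul IH HM tr_scalar_mx.
congr (_ + _); rewrite mulmxE.
by have := comm_mx_horner p (comm_mx_refl M); rewrite /comm_mx !mulmxE.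
Qed.

Lemma hmx_eig (M : 'M[R]_3) (q : {poly R}) (w : 'cV[R]_3) l :
  M *m w = l *: w -> horner_mx M q *m w = q.[l] *: w.
Proof.
move=> Hw; elim/poly_ind: q => [|p c IH].
  by rewrite rmorph0 mul0mx horner0 scale0r.
rewrite rmorphD rmorphM /= horner_mx_X horner_mx_C mulmxDl -mulmxE -mulmxA Hw.
rewrite -scalemxAr IH scalerA mul_scalar_mx hornerD hornerMX hornerC scalerDl.
by rewrite mulrC.
Qed.

Lemma hmx_sq (M : 'M[R]_3) (q r cp : {poly R}) k :
  horner_mx M cp = 0 -> q * q - k%:P * q = cp * r ->
  horner_mx M q *m horner_mx M q = k *: horner_mx M q.
Proof.
move=> Hc Hq; have := congr1 (horner_mx M) Hq.
rewrite rmorphB !rmorphM /= Hc mul0r horner_mx_C => /eqP; rewrite subr_eq0 => /eqP.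
by rewrite mulmxE => ->; rewrite -mul_scalar_mx mulmxE.
Qed.

Lemma sym_entry (Z : 'M[R]_3) i : Z^T = Z -> (Z *m Z) i i = \sum_j Z j i ^+ 2.
Proof.
move=> HZ; rewrite !mxE; apply: eq_bigr => j _.
by rewrite expr2; congr (_ * _); rewrite -{1}HZ mxE.
Qed.

Lemma psd_entry (Z : 'M[R]_3) k : Z^T = Z -> 0 <= k -> Z *m Z = k *: Z -> 0 <= Z 0 0.
Proof.
move=> HZ hk HZZ; have := @sym_entry Z 0 HZ; rewrite HZZ mxE !big_ord_recl big_ord0 addr0.
move=> E.
have h1 : 0 <= k * Z 0 0 by rewrite E; nra.
have h2 : k = 0 -> Z 0 0 = 0.
  by move=> k0; move: E; rewrite k0 mul0r; nra.
case: (ltrgt0P k) hk => // [kp|k0] _; last by rewrite h2.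
by rewrite -(pmulr_rge0 _ kp).
Qed.

Lemma tr0_entry (Q : 'M[R]_3) : Q^T = Q -> \tr (Q *m Q) = 0 -> Q 0 0 = 0.
Proof.
move=> HQ; rewrite /mxtrace.
under eq_bigr do rewrite sym_entry //.
rewrite !big_ord_recl !big_ord0 !addr0 => H.
nra.
Qed.


Lemma ent2 (M : 'M[R]_3) c1 c2 : M^T = M ->
  ((M - c1%:M) *m (M - c2%:M)) 0 0 =
  M 0 0 ^+ 2 + (M 1 0 ^+ 2 + M 2 0 ^+ 2) - (c1 + c2) * M 0 0 + c1 * c2.
Proof.
move=> HM.
have s01 : M 0 1 = M 1 0 by rewrite -{1}HM mxE.
have s02 : M 0 2 = M 2 0 by rewrite -{1}HM mxE.
rewrite !mxE !big_ord_recl big_ord0 !mxE /=.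
have l1 : (lift ord0 ord0 : 'I_3) = 1 by apply: val_inj.
have l2 : (lift ord0 (lift ord0 ord0) : 'I_3) = 2 by apply: val_inj.
rewrite l2 l1 s01 s02 /=.
ring.
Qed.

Lemma hmx2 (M : 'M[R]_3) c1 c2 :
  horner_mx M (('X - c1%:P) * ('X - c2%:P)) = (M - c1%:M) *m (M - c2%:M).
Proof. by rewrite rmorphM !rmorphB /= horner_mx_X !horner_mx_C mulmxE. Qed.

Lemma LA_main (M : 'M[R]_3) l1 l2 l3 (w : 'cV[R]_3) :
  M^T = M -> char_poly M = ('X - l1%:P) * ('X - l2%:P) * ('X - l3%:P) ->
  l2 <= l1 -> l3 <= l2 -> M *m w = l1 *: w -> (w^T *m w) 0 0 = 1 ->
  [/\ 0 <= M 0 0 ^+ 2 + (M 1 0 ^+ 2 + M 2 0 ^+ 2) - (l1 + l2) * M 0 0 + l1 * l2,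
      0 <= - (M 0 0 ^+ 2 + (M 1 0 ^+ 2 + M 2 0 ^+ 2) - (l1 + l3) * M 0 0 + l1 * l3) &
      M 0 0 ^+ 2 + (M 1 0 ^+ 2 + M 2 0 ^+ 2) - (l2 + l3) * M 0 0 + l2 * l3
        = (l1 - l2) * (l1 - l3) * w 0 0 ^+ 2].
Proof.
move=> HM Hc h12 h23 Hw Hww.
set cp := char_poly M.
have CH : horner_mx M cp = 0 by apply: Cayley_Hamilton.
split.
- rewrite -(ent2 _ _ _ HM) -hmx2.
  apply: (@psd_entry _ ((l1 - l3) * (l2 - l3))).
  + exact: hmx_tr.
  + nra.
  + apply: (@hmx_sq _ _ ('X - (l1 + l2 - l3)%:P) _ _ CH).
    rewrite /cp Hc !(polyCM, polyCB, polyCD); ring.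
- rewrite -(ent2 _ _ _ HM) -hmx2.
  have key : forall Z : 'M[R]_3, - Z 0 0 = (- Z) 0 0 by move=> Z; rewrite mxE.
  rewrite key -rmorphN.
  apply: (@psd_entry _ ((l1 - l2) * (l2 - l3))).
  + exact: hmx_tr.
  + nra.
  + apply: (@hmx_sq _ _ ('X - (l1 + l3 - l2)%:P) _ _ CH).
    rewrite /cp Hc !(polyCM, polyCB, polyCD); ring.
- rewrite -(ent2 _ _ _ HM) -hmx2.
  set T := horner_mx M _.
  set pi0 := (l1 - l2) * (l1 - l3).
  have TT : T^T = T by apply: hmx_tr.
  have T2 : T *m T = pi0 *: T.
    apply: (@hmx_sq _ _ ('X + (l1 - l2 - l3)%:P) _ _ CH).
    rewrite /cp Hc !(polyCM, polyCB, polyCD); ring.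
  have Tw : T *m w = pi0 *: w.
    by rewrite (@hmx_eig _ _ _ _ Hw) !hornerE.
  have wT : w^T *m T = pi0 *: w^T.
    by rewrite -TT -trmx_mul Tw linearZ.
  have ww : w^T *m w = 1%:M.
    by apply/matrixP => i j; rewrite !ord1 Hww mxE.
  set P := w *m w^T.
  have TP : T *m P = pi0 *: P by rewrite /P mulmxA Tw scalemxAl.
  have PT : P *m T = pi0 *: P by rewrite /P -mulmxA wT scalemxAr.
  have PP : P *m P = P by rewrite /P mulmxA -(mulmxA w) ww mulmx1.
  set Q := T - pi0 *: P.
  have QT : Q^T = Q by rewrite /Q linearB /= linearZ /= TT /P trmx_mul trmxK.
  have Q2 : Q *m Q = pi0 *: Q.
    rewrite /Q mulmxBl !mulmxBr T2 -!scalemxAl -!scalemxAr TP PT PP.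
    by rewrite subrr subr0 scalerBr.
  have trQ : \tr Q = 0.
    rewrite /Q linearB /= linearZ /= /P mxtrace_mulC ww mxtrace_scalar.
    by rewrite /T hmx2 (@trT _ _ _ _ _ Hc) mulr1n mulr1 subrr.
  have := @tr0_entry Q QT; rewrite Q2 mxtraceZ trQ mulr0 => /(_ erefl).
  rewrite /Q !mxE !big_ord1 !mxE => /eqP; rewrite subr_eq0 => /eqP ->.
  by rewrite expr2 mulrA.
Qed.

End LA.

Section S_t6.
Variable R : realType.
Local Notation I2 := (cI2 R).

Lemma cmul_I2 (X : cmx R) : cmul I2 X = X.
Proof. by case: X => X1 X2; rewrite /cmul /cI2 /= !mul1mx !mul0mx subr0 addr0. Qed.

Lemma cadj_I2 : cadj I2 = I2.
Proof. by rewrite /cadj /cI2 /= trmx1 trmx0 oppr0. Qed.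

Lemma unitaryI : unitary I2.
Proof. by rewrite /unitary cadj_I2 cmul_I2. Qed.

Lemma rgradI h : rgrad h I2 = Defs.skew (egrad h I2).
Proof. by rewrite /rgrad cadj_I2 !cmul_I2. Qed.

Lemma lift00 : (lift ord0 ord0 : 'I_2) = 1. Proof. exact: val_inj. Qed.

Lemma frob_skew (G : cmx R) : frob (Defs.skew G) ^+ 2 =
  G.2 0 0 ^+ 2 + G.2 1 1 ^+ 2 + ((G.1 1 0 - G.1 0 1) ^+ 2 + (G.2 0 1 + G.2 1 0) ^+ 2) / 2.
Proof.
rewrite /frob sqr_sqrtr; last first.
  by apply: sumr_ge0 => i _; apply: sumr_ge0 => j _; apply: addr_ge0; apply: sqr_ge0.
rewrite !big_ord_recl !big_ord0 /Defs.skew /csub /cadj /= !mxE lift00.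
by field.
Qed.

Lemma Psi0 p : Psi 0 p = I2.
Proof.
rewrite /Psi /cI2 cos0 sin0; congr (_, _); apply/matrixP => i j; rewrite !mxE.
  by case: (i == j); rewrite // mul0r oppr0; case: (i == 0).
by case: (i == j); rewrite // mul0r oppr0.
Qed.

Lemma frob_Psi t p : frob (csub (Psi t p) I2) ^+ 2 = 4 * (1 - cos t).
Proof.
rewrite /frob sqr_sqrtr; last first.
  by apply: sumr_ge0 => i _; apply: sumr_ge0 => j _; apply: addr_ge0; apply: sqr_ge0.
rewrite !big_ord_recl !big_ord0 /csub /cI2 /= !mxE lift00 /=.
have e1 := cos2Dsin2 t; have e2 := cos2Dsin2 p.
transitivity (2 * ((cos t - 1) ^+ 2 + sin t ^+ 2 * (cos p ^+ 2 + sin p ^+ 2))).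
  ring.
rewrite e2 mulr1; transitivity (2 * (cos t ^+ 2 + sin t ^+ 2) - 4 * cos t + 2).
  ring.
rewrite e1; ring.
Qed.

End S_t6.

Section S_t7.
Variable R : realType.

Lemma zab_quad a b t p (M : 'M[R]_3) :
  ((zab a b t p)^T *m M *m zab a b t p) 0 0 =
  M 0 0 * cos (a%:R * t) ^+ 2
  + (- ((M 0 1 + M 1 0) * cos (b%:R * p) + (M 0 2 + M 2 0) * sin (b%:R * p)))
    * (cos (a%:R * t) * sin (a%:R * t))
  + (M 1 1 * cos (b%:R * p) ^+ 2 + (M 1 2 + M 2 1) * (cos (b%:R * p) * sin (b%:R * p))
     + M 2 2 * sin (b%:R * p) ^+ 2) * sin (a%:R * t) ^+ 2.
Proof.
rewrite !mxE !big_ord_recl !big_ord0 !mxE.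
rewrite !big_ord_recl !big_ord0 !mxE /=.
have l1 : (lift ord0 ord0 : 'I_3) = 1 by apply: val_inj.
have l2 : (lift ord0 (lift ord0 ord0) : 'I_3) = 2 by apply: val_inj.
rewrite ?l2 ?l1 /=.
ring.
Qed.

Lemma cos_ineq (a : nat) (t : R) : (0 < a)%N -> 0 <= t <= pi / (2 * a%:R) ->
  (1 - cos t) / 2 <= 1 - cos (a%:R * t) ^+ 2.
Proof.
move=> a0 /andP[t0 tle].
have ap : (0 : R) < a%:R by rewrite ltr0n.
have a1 : (1 : R) <= a%:R by rewrite ler1n.
have e : 1 - cos (a%:R * t) ^+ 2 = (1 - cos ((a%:R * t) *+ 2)) / 2.
  by rewrite cos_mulr2n; field.
rewrite e ler_pM2r ?invr_gt0 ?ltr0n // lerD2l lerN2.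
have h2 : (a%:R * t) *+ 2 <= pi.
  rewrite ler_pdivlMr ?mulr_gt0 ?ltr0n // in tle.
  by rewrite -mulr_natr; nra.
have h1 : t <= (a%:R * t) *+ 2 by rewrite -mulr_natr; nra.
have pi0 := pi_ge0 R.
rewrite leNgt ltr_cos ?in_itv /= ?t0 ?(le_trans t0 h1) ?(le_trans h1 h2) //.
  by rewrite -leNgt.
Qed.

Lemma polar (x y : R) : x ^+ 2 + y ^+ 2 = 1 -> exists p, cos p = x /\ sin p = y.
Proof.
move=> e.
have hx : -1 <= x <= 1 by apply/andP; split; nra.
have hs : Num.sqrt (1 - x ^+ 2) = `|y|.
  have -> : 1 - x ^+ 2 = y ^+ 2 by rewrite -e; ring.
  by rewrite sqrtr_sqr.
have [y0|y0] := leP 0 y.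
  exists (acos x); split; first by rewrite acosK // in_itv.
  by rewrite sin_acos // hs ger0_norm.
exists (- acos x); split; first by rewrite cosN acosK // in_itv.
by rewrite sinN sin_acos // hs ltr0_norm // opprK.
Qed.

Lemma final_ineq (eps D s2 q d2 d3 : R) : 0 < eps -> 0 <= q -> 0 <= d2 -> d2 <= d3 ->
  (d3 - d2) / d3 <= 1 - eps -> s2 <= d3 * D -> d2 * d3 * q <= d3 * D ->
  0 <= s2 -> 0 <= D -> eps ^+ 2 * s2 * q <= D ^+ 2.
Proof.
move=> e0 q0 d20 d23 hr hs hD s0 D0.
have [d3z|d3p] := eqVneq d3 0.
  have -> : s2 = 0 by move: hs; rewrite d3z mul0r; lra.
  by rewrite mulr0 mul0r sqr_ge0.
have d3p' : 0 < d3 by rewrite lt_def d3p (le_trans d20 d23).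
rewrite ler_pdivrMr // in hr.
have e1 : eps <= 1 by nra.
have h1 : d2 * q <= D.
  have : d3 * (d2 * q) <= d3 * D by rewrite mulrA (mulrC d3 d2).
  by rewrite ler_pM2l.
have h2 : eps * d3 <= d2 by lra.
have hd : eps * d3 * q <= D by apply: le_trans h1; apply: ler_wpM2r.
have : eps ^+ 2 * s2 * q <= eps ^+ 2 * (d3 * D) * q.
  by apply: ler_wpM2r => //; apply: ler_wpM2l => //; apply: sqr_ge0.
move/le_trans; apply.
have e3 : eps ^+ 2 * (d3 * D) * q = eps * D * (eps * d3 * q) by rewrite expr2; ring.
rewrite e3.
have : eps * D * (eps * d3 * q) <= eps * D * D by apply: ler_wpM2l => //; apply: mulr_ge0 => //; lra.
move/le_trans; apply.
have : eps * D * D <= 1 * D * D by apply: ler_wpM2r => //; apply: ler_wpM2r.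
by rewrite mul1r expr2.
Qed.

End S_t7.

Section S_t8.
Variable R : realType.
Local Notation I2 := (cI2 R).

Lemma chain (h : cmx R -> R) (g : R -> cmx R) :
  differentiable g 0 -> differentiable h (g 0) ->
  'D_1 (h \o g) 0 = 'D_('D_1 g 0) h (g 0).
Proof.
move=> dg dh; rewrite deriveE; last exact: differentiable_comp.
by rewrite diff_comp //= -deriveE // -deriveE.
Qed.

Lemma curve_pair (g1 g2 : R -> 'M[R]_2) :
  (forall i j, derivable (fun t => g1 t i j) 0 1) ->
  (forall i j, derivable (fun t => g2 t i j) 0 1) ->
  let g := fun t => (g1 t, g2 t) in
  differentiable g 0 /\
  'D_1 g 0 = (\matrix_(i, j) 'D_1 (fun t => g1 t i j) 0,
              \matrix_(i, j) 'D_1 (fun t => g2 t i j) 0).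
Proof.
move=> h1 h2 g.
have d1 : differentiable g1 0 by apply/derivable1_diffP/derivable_mxP.
have d2 : differentiable g2 0 by apply/derivable1_diffP/derivable_mxP.
have dg : differentiable g 0 by exact: differentiable_pair.
split => //.
rewrite (deriveE _ dg).
rewrite /g. have E := diff_pair d1 d2.
etransitivity; [exact: (congr1 (fun F => F (1:R)) E)|].
congr (_, _).
- etransitivity; [exact: (esym (deriveE _ d1))|].
  by apply: derive_mx; apply/derivable_mxP.
- etransitivity; [exact: (esym (deriveE _ d2))|].
  by apply: derive_mx; apply/derivable_mxP.
Qed.

Lemma curve_pair2 (g1 g2 : R -> 'M[R]_2) (D1 D2 : 'M[R]_2) :
  (forall i j, is_derive (0:R) 1 (fun t => g1 t i j) (D1 i j)) ->
  (forall i j, is_derive (0:R) 1 (fun t => g2 t i j) (D2 i j)) ->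
  differentiable (fun t => (g1 t, g2 t)) 0 /\ 'D_1 (fun t => (g1 t, g2 t)) 0 = (D1, D2).
Proof.
move=> h1 h2.
have [dg Dg] := @curve_pair g1 g2 (fun i j => ltac:(by case: (h1 i j))) (fun i j => ltac:(by case: (h2 i j))).
split => //; rewrite Dg; congr (_, _); apply/matrixP => i j; rewrite mxE.
  by have H := h1 i j; apply: derive_val.
by have H := h2 i j; apply: derive_val.
Qed.

Lemma isd_ext (f g : R -> R) d : (forall t, f t = g t) -> is_derive (0:R) 1 g d ->
  is_derive (0:R) (1:R) f d.
Proof. by move=> fg; have -> : f = g by apply/funext. Qed.

Lemma isd_cos : is_derive (0:R) 1 cos 0.
Proof. by have := is_derive_cos (0:R); rewrite sin0 oppr0. Qed.
Lemma isd_sin : is_derive (0:R) 1 sin 1.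
Proof. by have := is_derive_sin (0:R); rewrite cos0. Qed.
Lemma isd_cst (c : R) : is_derive (0:R) 1 (fun _ : R => c) 0.
Proof. exact: is_derive_cst. Qed.
Lemma isd_sinM (c : R) : is_derive (0:R) 1 (fun t => sin t * c) c.
Proof.
have := is_deriveM isd_sin (isd_cst c).
by rewrite sin0 scaler0 add0r [_ *: 1]mulr1.
Qed.
Lemma isd_NsinM (c : R) : is_derive (0:R) 1 (fun t => - (sin t * c)) (- c).
Proof. exact: (is_deriveN (isd_sinM c)). Qed.

End S_t8.

Section S_t9.
Variable R : realType.
Local Notation I2 := (cI2 R).

Lemma ord2 (i : 'I_2) : i = 0 \/ i = 1.
Proof. by case: i => [[|[|//]]] Hi; [left|right]; apply: val_inj. Qed.

Lemma diag_deriv (h : cmx R -> R) (k : 'I_2) : differentiable h I2 ->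
  (forall Ps D, unitary Ps -> diag_unitary D -> h (cmul Ps D) = h Ps) ->
  'D_(((0:'M[R]_2), delta_mx k k) : cmx R) h I2 = 0.
Proof.
move=> dh Hinv.
pose g1 := fun t : R => \matrix_(i, j) (if i == j then (if i == k then cos t else 1) else 0) : 'M[R]_2.
pose g2 := fun t : R => \matrix_(i, j) (if (i == k) && (j == k) then sin t else 0) : 'M[R]_2.
have H1 : forall i j, is_derive (0:R) 1 (fun t => g1 t i j) ((0:'M[R]_2) i j).
  move=> i j; rewrite mxE.
  apply: (@isd_ext R _ (fun t => if i == j then (if i == k then cos t else 1) else 0)) => [t|].
    by rewrite /g1 mxE.
  by case: (i == j); [case: (i == k); [exact: isd_cos | exact: isd_cst] | exact: isd_cst].
have H2 : forall i j, is_derive (0:R) 1 (fun t => g2 t i j) (delta_mx k k i j).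
  move=> i j; rewrite mxE.
  apply: (@isd_ext R _ (fun t => if (i == k) && (j == k) then sin t else 0)) => [t|].
    by rewrite /g2 mxE.
  by case: (_ && _); [exact: isd_sin | exact: isd_cst].
have [dg Dg] := @curve_pair2 R _ _ _ _ H1 H2.
have g0 : (g1 0, g2 0) = I2.
  rewrite /cI2; congr (_, _); apply/matrixP => i j; rewrite !mxE ?cos0 ?sin0.
    by case: (i == j) => //; case: (i == k).
  by case: (_ && _).
have un : forall t, diag_unitary (g1 t, g2 t).
  move=> t; split.
    rewrite /unitary /cmul /cadj /cI2 /=; congr (_, _); apply/matrixP => i j;
    rewrite !mxE !big_ord_recl !big_ord0 !mxE lift00;
    have e := cos2Dsin2 t;
    case: (ord2 k) => ->; case: (ord2 i) => ->; case: (ord2 j) => -> /=;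
    rewrite ?mxE /=; nra.
  move=> i j ij; rewrite /= !mxE (negbTE ij); split => //.
  by case: eqP => // ik; case: eqP => // jk; rewrite ik jk eqxx in ij.
have hc : h \o (fun t => (g1 t, g2 t)) = cst (h I2).
  apply/funext => t /=; rewrite -{1}(@cmul_I2 R (g1 t, g2 t)); apply: Hinv => //.
  exact: unitaryI R.
have := @chain R h _ dg; rewrite g0 => /(_ dh).
by rewrite Dg hc derive_cst.
Qed.

End S_t9.

Section S_t10.
Variable R : realType.
Local Notation I2 := (cI2 R).


Definition D1p (p : R) : 'M[R]_2 :=
  \matrix_(i, j) (if i == j then 0 else if i == 0 then - cos p else cos p).
Definition D2p (p : R) : 'M[R]_2 :=
  \matrix_(i, j) (if i == j then 0 else - sin p).

Lemma psi_deriv (h : cmx R -> R) p : differentiable h I2 ->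
  'D_1 (fun t => h (Psi t p)) 0 = 'D_((D1p p, D2p p) : cmx R) h I2.
Proof.
move=> dh.
pose g1 := fun t : R => (Psi t p).1.
pose g2 := fun t : R => (Psi t p).2.
have H1 : forall i j, is_derive (0:R) 1 (fun t => g1 t i j) (D1p p i j).
  move=> i j; rewrite mxE.
  apply: (@isd_ext R _ (fun t => if i == j then cos t else if i == 0 then - (sin t * cos p) else sin t * cos p)) => [t|].
    by rewrite /g1 /Psi /= mxE.
  case: (i == j); first exact: isd_cos.
  by case: (i == 0); [exact: isd_NsinM | exact: isd_sinM].
have H2 : forall i j, is_derive (0:R) 1 (fun t => g2 t i j) (D2p p i j).
  move=> i j; rewrite mxE.
  apply: (@isd_ext R _ (fun t => if i == j then 0 else - (sin t * sin p))) => [t|].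
    by rewrite /g2 /Psi /= mxE.
  by case: (i == j); [exact: isd_cst | exact: isd_NsinM].
have [dg Dg] := @curve_pair2 R _ _ _ _ H1 H2.
have := @chain R h (fun t => Psi t p) dg.
rewrite Psi0 => /(_ dh) E.
rewrite -[LHS]/('D_1 (h \o (fun t => Psi t p)) 0) E.
by rewrite -Dg.
Qed.

Lemma Dlin (h : cmx R -> R) (A B : 'M[R]_2) : differentiable h I2 ->
  'D_((A, B) : cmx R) h I2 = \sum_i \sum_j (A i j * (egrad h I2).1 i j + B i j * (egrad h I2).2 i j).
Proof.
move=> dh.
have dec : ((A, B) : cmx R) = \sum_i \sum_j (A i j *: ((delta_mx i j, 0) : cmx R) + B i j *: ((0, delta_mx i j) : cmx R)).
  rewrite !big_ord_recl !big_ord0 lift00.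
  set S := (X in _ = X).
  have -> : S = (S.1, S.2) by case: S.
  congr (_, _); apply/matrixP => i j; rewrite /S; cbn; rewrite !mxE;
  by case: (ord2 i) => ->; case: (ord2 j) => ->; rewrite /=; ring.
rewrite dec (deriveE _ dh) raddf_sum; apply: eq_bigr => i _.
rewrite raddf_sum; apply: eq_bigr => j _.
have L1 := linearZZ ('d h I2) (A i j) ((delta_mx i j, 0) : cmx R).
have L2 := linearZZ ('d h I2) (B i j) ((0, delta_mx i j) : cmx R).
rewrite raddfD.
apply: (eq_trans (f_equal2 +%R L1 L2)).
rewrite /egrad /= !mxE !(deriveE _ dh).
reflexivity.
Qed.

End S_t10.

Section S_t4.
Variable R : realType.

Lemma dcos (a : R) : is_derive (0:R) 1 (fun t => cos (a * t)) 0.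
Proof.
have := @is_derive1_comp R cos (fun t => a * t) 0 (- sin (a * 0)) a.
rewrite mulr0 sin0 oppr0 mul0r; apply.
  by have := is_derive_cos (0:R); rewrite sin0 oppr0.
apply: is_derive_eq. by rewrite [_%:A]mulr1.
Qed.

Lemma dsin (a : R) : is_derive (0:R) 1 (fun t => sin (a * t)) a.
Proof.
have := @is_derive1_comp R sin (fun t => a * t) 0 (cos (a * 0)) a.
rewrite mulr0 cos0 mul1r; apply.
  by have := is_derive_sin (0:R); rewrite cos0.
apply: is_derive_eq. by rewrite [_%:A]mulr1.
Qed.

Lemma dquad (a al be ga C : R) :
  'D_1 (fun t => al * cos (a * t) ^+ 2 + be * (cos (a * t) * sin (a * t))
      + ga * sin (a * t) ^+ 2 + C) 0 = be * a.
Proof.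
have Du := dcos a; have Dv := dsin a.
set u := (fun t => cos (a * t)) in Du *.
set v := (fun t => sin (a * t)) in Dv *.
have -> : (fun t => al * cos (a * t) ^+ 2 + be * (cos (a * t) * sin (a * t))
      + ga * sin (a * t) ^+ 2 + C) = (al *: (u ^+ 2) + be *: (u * v) + ga *: (v ^+ 2) + cst C).
  by apply/funext => t.
have [_ ->] := is_deriveD (is_deriveD (is_deriveD (is_deriveZ al (is_deriveX 2 Du))
   (is_deriveZ be (is_deriveM Du Dv))) (is_deriveZ ga (is_deriveX 2 Dv))) (@is_derive_cst _ R^o R^o C 0 1).
rewrite /u /v /= mulr0 cos0 sin0.
by rewrite !(scaler0, scale0r, scale1r, expr1, mulr0, mul0r, addr0, add0r).
Qed.
End S_t4.

Section S_t11.
Variable R : realType.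
Local Notation I2 := (cI2 R).

Lemma D1p_e (p : R) : [/\ D1p R p ord0 ord0 = 0, D1p R p ord0 (lift ord0 ord0) = - cos p,
  D1p R p (lift ord0 ord0) ord0 = cos p & D1p R p (lift ord0 ord0) (lift ord0 ord0) = 0].
Proof. by rewrite !mxE. Qed.
Lemma D2p_e (p : R) : [/\ D2p R p ord0 ord0 = 0, D2p R p ord0 (lift ord0 ord0) = - sin p,
  D2p R p (lift ord0 ord0) ord0 = - sin p & D2p R p (lift ord0 ord0) (lift ord0 ord0) = 0].
Proof. by rewrite !mxE. Qed.

Lemma Dpsi (h : cmx R -> R) (p : R) : differentiable h I2 ->
  'D_((D1p R p, D2p R p) : cmx R) h I2 =
  cos p * ((egrad h I2).1 1 0 - (egrad h I2).1 0 1)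
  - sin p * ((egrad h I2).2 0 1 + (egrad h I2).2 1 0).
Proof.
move=> dh.
rewrite (@Dlin R h _ _ dh).
rewrite !big_ord_recl !big_ord0.
have [a1 a2 a3 a4] := D1p_e p.
have [b1 b2 b3 b4] := D2p_e p.
rewrite a1 a2 a3 a4 b1 b2 b3 b4 lift00.
have o0 : (ord0 : 'I_2) = 0 by apply: val_inj.
rewrite o0.
move: (egrad h I2) => G.
ring.
Qed.
End S_t11.

Local Open Scope classical_set_scope.

Theorem lemma4p4 (R : realType) (a b : nat) (h : cmx R -> R)
  (M : 'M[R]_3) (C : R) (l1 l2 l3 eps : R) (w : 'cV[R]_3) (ts ps : R) :
  (0 < a)%N -> (0 < b)%N ->
  (exists O : set (cmx R), open O /\ (forall U, unitary U -> O U) /\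
      (forall X, O X -> differentiable h X)) ->
  (forall Ps D, unitary Ps -> diag_unitary D -> h (cmul Ps D) = h Ps) ->
  M^T = M ->
  (forall t p : R, h (Psi t p) = ((zab a b t p)^T *m M *m zab a b t p) 0 0 + C) ->
  char_poly M = ('X - l1%:P) * ('X - l2%:P) * ('X - l3%:P) ->
  l2 <= l1 -> l3 <= l2 ->
  0 < eps ->
  (l2 - l3) / (l1 - l3) <= 1 - eps ->
  M *m w = l1 *: w ->
  (w^T *m w) 0 0 = 1 ->
  0 <= w 0 0 ->
  0 <= ts <= pi / (2 * a%:R) ->
  zab a b ts ps = w ->
  h (Psi ts ps) - h (cI2 R) >=
    eps / (4 * a%:R) * frob (rgrad h (cI2 R)) * frob (csub (Psi ts ps) (cI2 R)).
Proof.
move=> Ha Hb [OO [_ [HU HD]]] Hinv HM Hpsi Hc h12 h23 e0 hr Hw Hww Hw0 hts Hz.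
have dh : differentiable h (cI2 R) by apply: HD; apply: HU; exact: unitaryI.
have G00 : (egrad h (cI2 R)).2 0 0 = 0.
  by rewrite /egrad mxE; exact: (@diag_deriv R h 0 dh Hinv).
have G11 : (egrad h (cI2 R)).2 1 1 = 0.
  by rewrite /egrad mxE; exact: (@diag_deriv R h 1 dh Hinv).
set A := (a%:R : R).
have Ap : 0 < A by rewrite /A ltr0n.
have s01 : M 0 1 = M 1 0 by rewrite -{1}HM mxE.
have s02 : M 0 2 = M 2 0 by rewrite -{1}HM mxE.
have keyE : forall p, - ((M 0 1 + M 1 0) * cos (b%:R * p) + (M 0 2 + M 2 0) * sin (b%:R * p)) * A
   = cos p * ((egrad h (cI2 R)).1 1 0 - (egrad h (cI2 R)).1 0 1)
     - sin p * ((egrad h (cI2 R)).2 0 1 + (egrad h (cI2 R)).2 1 0).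
  move=> p.
  have E1 := @psi_deriv R h p dh.
  rewrite (@Dpsi R h p dh) in E1.
  set K1 := cos (b%:R * p); set K2 := sin (b%:R * p).
  set be := - ((M 0 1 + M 1 0) * K1 + (M 0 2 + M 2 0) * K2).
  set ga := M 1 1 * K1 ^+ 2 + (M 1 2 + M 2 1) * (K1 * K2) + M 2 2 * K2 ^+ 2.
  have E2 : (fun t => h (Psi t p)) = (fun t => M 0 0 * cos (A * t) ^+ 2
      + be * (cos (A * t) * sin (A * t)) + ga * sin (A * t) ^+ 2 + C).
    by apply/funext => t; rewrite Hpsi zab_quad.
  have E3 : 'D_1 (fun t => h (Psi t p)) 0 = be * A.
    by rewrite E2; apply: dquad.
  exact: (etrans (esym E3) E1).
have F1e : frob (rgrad h (cI2 R)) ^+ 2 =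
  (egrad h (cI2 R)).2 0 0 ^+ 2 + (egrad h (cI2 R)).2 1 1 ^+ 2 +
  (((egrad h (cI2 R)).1 1 0 - (egrad h (cI2 R)).1 0 1) ^+ 2 +
   ((egrad h (cI2 R)).2 0 1 + (egrad h (cI2 R)).2 1 0) ^+ 2) / 2.
  by rewrite rgradI frob_skew.
have F10 : 0 <= frob (rgrad h (cI2 R)) by apply: sqrtr_ge0.
have F20 : 0 <= frob (csub (Psi ts ps) (cI2 R)) by apply: sqrtr_ge0.
have F2e := @frob_Psi R ts ps.
have hI : h (cI2 R) = M 0 0 + C.
  rewrite -(@Psi0 R 0) Hpsi zab_quad !mulr0 cos0 sin0.
  by rewrite expr1n expr0n /= !mulr0 mulr1 !addr0.
have hP : h (Psi ts ps) = l1 + C.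
  by rewrite Hpsi Hz -mulmxA Hw -scalemxAr mxE Hww mulr1.
rewrite hP hI.
move: (egrad h (cI2 R)) G00 G11 keyE F1e => G G00 G11 keyE F1e.
move: (frob (rgrad h (cI2 R))) F1e F10 => F1 F1e F10.
move: (frob (csub (Psi ts ps) (cI2 R))) F2e F20 => F2 F2e F20.
clear Hpsi hP hI Hinv HD HU dh.
set s2 := M 1 0 ^+ 2 + M 2 0 ^+ 2.
set g1 := G.1 1 0 - G.1 0 1.
set g2 := - (G.2 0 1 + G.2 1 0).
have key : forall p, cos p * g1 + sin p * g2
    = - (2 * A) * (M 1 0 * cos (b%:R * p) + M 2 0 * sin (b%:R * p)).
  move=> p; have := keyE p; rewrite /g1 /g2 s01 s02 => E; lra.
have s2p : 0 <= s2 by rewrite /s2; apply: addr_ge0; apply: sqr_ge0.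
have Gb : g1 ^+ 2 + g2 ^+ 2 <= 4 * A ^+ 2 * s2.
  set n := g1 ^+ 2 + g2 ^+ 2.
  have n0 : 0 <= n by rewrite /n; apply: addr_ge0; apply: sqr_ge0.
  have [nz|nz] := eqVneq n 0.
    by rewrite nz; apply: mulr_ge0 => //; apply: mulr_ge0 => //; apply: sqr_ge0.
  set r := Num.sqrt n.
  have rp : 0 < r by rewrite sqrtr_gt0 lt_def nz n0.
  have r2 : r ^+ 2 = n by rewrite sqr_sqrtr.
  have rn0 : r != 0 by rewrite gt_eqF.
  have [p [cp sp]] : exists p, cos p = g1 / r /\ sin p = g2 / r.
    apply: polar; rewrite !expr_div_n r2 -mulrDl divff //.
  have := key p; rewrite cp sp.
  have e : g1 / r * g1 + g2 / r * g2 = r.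
    transitivity (n / r); first by rewrite /n; field.
    by rewrite -r2 expr2 mulfK.
  rewrite e => hr'.
  set K1 := cos (b%:R * p); set K2 := sin (b%:R * p).
  have k12 : K1 ^+ 2 + K2 ^+ 2 = 1 by apply: cos2Dsin2.
  have cs : (M 1 0 * K1 + M 2 0 * K2) ^+ 2 <= s2.
    have := sqr_ge0 (M 1 0 * K2 - M 2 0 * K1).
    have -> : s2 = s2 * (K1 ^+ 2 + K2 ^+ 2) by rewrite k12 mulr1.
    rewrite /s2 => hh; nra.
  rewrite -r2 hr' exprMn sqrrN exprMn.
  have -> : (2 : R) ^+ 2 * A ^+ 2 = 4 * A ^+ 2 by rewrite expr2; ring.
  by apply: ler_wpM2l => //; apply: mulr_ge0 => //; apply: sqr_ge0.
have F1e' : F1 ^+ 2 = (g1 ^+ 2 + g2 ^+ 2) / 2.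
  rewrite F1e G00 G11 /g1 /g2 sqrrN.
  rewrite expr0n /= add0r add0r.
  by congr (_ / 2); congr (_ + _); rewrite -sqrrN opprB.
have hcw : w 0 0 = cos (A * ts) by rewrite -Hz mxE.
have [L1 L2 L3] := @LA_main R M l1 l2 l3 w HM Hc h12 h23 Hw Hww.
rewrite hcw in L3.
set q := 1 - cos (A * ts) ^+ 2.
have q0 : 0 <= q by rewrite /q -(cos2Dsin2 (A * ts)) addrC addKr; apply: sqr_ge0.
have hq : (1 - cos ts) / 2 <= q by apply: cos_ineq.
set D := l1 - M 0 0.
have hs : s2 <= (l1 - l3) * D.
  rewrite /D -/s2 in L2 *; have := sqr_ge0 (l1 - M 0 0); nra.
have hD : (l1 - l2) * (l1 - l3) * q <= (l1 - l3) * D.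
  rewrite /D /q -/s2 in L1 L3 *; nra.
have D0 : 0 <= D.
  rewrite /D -/s2 in L2 *; nra.
have hr2 : ((l1 - l3) - (l1 - l2)) / (l1 - l3) <= 1 - eps.
  by rewrite (_ : (l1 - l3) - (l1 - l2) = l2 - l3) //; ring.
have d20 : 0 <= l1 - l2 by rewrite subr_ge0.
have d23 : l1 - l2 <= l1 - l3 by rewrite lerD2l lerN2.
have fin := @final_ineq R eps D s2 q (l1 - l2) (l1 - l3) e0 q0 d20 d23 hr2 hs hD s2p D0.
rewrite (_ : l1 + C - (M 0 0 + C) = D); last by rewrite /D; ring.
have hF1 : F1 ^+ 2 <= 2 * A ^+ 2 * s2.
  rewrite F1e'; lra.
have hF2 : F2 ^+ 2 <= 8 * q by rewrite F2e; lra.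
set X := eps / (4 * A) * F1 * F2.
have X2 : X ^+ 2 <= eps ^+ 2 * s2 * q.
  have -> : X ^+ 2 = (eps / (4 * A)) ^+ 2 * F1 ^+ 2 * F2 ^+ 2 by rewrite /X; ring.
  have k0 : 0 <= (eps / (4 * A)) ^+ 2 by apply: sqr_ge0.
  apply: (@le_trans _ _ ((eps / (4 * A)) ^+ 2 * (2 * A ^+ 2 * s2) * (8 * q))).
    have P : F1 ^+ 2 * F2 ^+ 2 <= (2 * A ^+ 2 * s2) * (8 * q).
      by apply: ler_pM => //; apply: sqr_ge0.
    by have Q := ler_wpM2l k0 P; rewrite !mulrA in Q *.
  rewrite le_eqVlt; apply/orP; left; apply/eqP.
  field; rewrite gt_eqF //.
have := le_trans X2 fin => XD.
nra.
Qed.
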